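(* Let $G$ be a connected simple graph with maximum degree at most $3$ and minimum degree at least $2$, in which no two adjacent vertices both have degree $3$. Let $M_1,M_2$ be disjoint matchings of $G$ such that $|M_1\cup M_2|$ is maximum over all pairs of disjoint matchings, and, subject to this, such that $G_{M_1,M_2}$ has the minimum number of connected components. Let $H$ be the graph with vertex set $E(G)\setminus(M_1\cup M_2)$ in which two distinct edges are adjacent if and only if their distance in $G$ is at most $2$. Then $H$ has no odd cycle.
   Context: $G_{M_1,M_2}$ denotes the subgraph of $G$ induced by the edge set $E(G)\setminus(M_1\cup M_2)$. The distance between two edges of $G$ is the distance between the corresponding vertices in the line graph of $G$. *)

(* Defs.v *)
From mathcomp Require Import all_boot.
Set Implicit Arguments. Unset Strict Implicit. Unset Printing Implicit Defensive.

(* A simple graph: a symmetric irreflexive relation [adj] on a finite type V.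
   Edges are represented as 2-element vertex sets {x, y}. *)
Section Graphs.
Variables (V : finType) (adj : rel V).

Definition edges : {set {set V}} :=
  [set e : {set V} | [exists x, exists y, adj x y && (e == [set x; y])]].

Definition deg (x : V) : nat := #|[set y | adj x y]|.

Definition connected_graph : Prop := forall x y : V, connect adj x y.

Definition matching (M : {set {set V}}) : Prop :=
  M \subset edges /\
  (forall e f, e \in M -> f \in M -> e != f -> [disjoint e & f]).

Definition esub_verts (F : {set {set V}}) : {set V} := \bigcup_(e in F) e.
Definition esub_adj (F : {set {set V}}) : rel V := fun x y => [set x; y] \in F.

Definition ncomp (F : {set {set V}}) : nat :=
  #|[set [set y | connect (esub_adj F) x y] | x in esub_verts F]|.

(* distance at most 2 in the line graph of G, for edges e f *)
Definition edist_le2 (e f : {set V}) : bool :=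
  ~~ [disjoint e & f] ||
  [exists g in edges, ~~ [disjoint e & g] && ~~ [disjoint g & f]].

Definition Hadj (e f : {set V}) : bool := (e != f) && edist_le2 e f.

End Graphs.

(* Main.v *)
Require Import Defs.
From mathcomp Require Import all_boot.
From mathcomp Require Import zify.
Set Implicit Arguments. Unset Strict Implicit. Unset Printing Implicit Defensive.

Lemma cycle_nth (T : eqType) (r : rel T) (s : seq T) x0 :
  cycle r s -> forall i, i < size s -> r (nth x0 s i) (nth x0 s (i.+1 %% size s)).
Proof.
case: s => [|x p] //= /(pathP x0) H i Hi.
have := H i; rewrite size_rcons => /(_ Hi).
have E1 : nth x0 (x :: rcons p x) i = nth x0 (x :: p) i.
  case: i Hi {H} => [|j] //= Hj; rewrite nth_rcons; by rewrite ltnS in Hj; rewrite Hj.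
rewrite E1 nth_rcons.
case: ltngtP => Hip.
- by rewrite modn_small.
- lia.
- by rewrite Hip modnn.
Qed.


Lemma disjP (T : finType) (A B : {set T}) :
  reflect (forall x, x \in A -> x \in B -> False) [disjoint A & B].
Proof.
apply: (iffP pred0P) => H.
  by move=> x xA xB; have := H x; rewrite /= xA xB.
by move=> x /=; apply/negP => /andP [] /H H1 /H1.
Qed.

Section PL.
Variables (T : finType) (g : rel T).
Hypothesis gsym : symmetric g.
Hypothesis g2 : forall x a b c, g x a -> g x b -> g x c -> [\/ a = b, a = c | b = c].
Definition uniqnb x := exists w, g x w /\ forall w', g x w' -> w' = w.

Lemma walk p : forall q u w, g u w -> uniq [:: u, w & p] -> uniq [:: u, w & q] ->
  path g w p -> path g w q -> uniqnb (last w p) -> uniqnb (last w q) ->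
  last w p = last w q.
Proof.
elim: p => [|p1 p IH] [|q1 q] u w guw up uq pp pq /= hp hq //.
- case: hp => t [gwt ht].
  have gwu : g w u by rewrite gsym.
  move: pq => /andP [gwq _].
  have e1 := ht u gwu; have e2 := ht q1 gwq.
  by move: uq; rewrite /= !inE e1 -e2 eqxx !orbT.
- case: hq => t [gwt ht].
  have gwu : g w u by rewrite gsym.
  move: pp => /andP [gwp _].
  have e1 := ht u gwu; have e2 := ht p1 gwp.
  by move: up; rewrite /= !inE e1 -e2 eqxx !orbT.
- move: pp pq => /andP [gwp pp] /andP [gwq pq].
  have gwu : g w u by rewrite gsym.
  have : p1 = q1.
    case: (g2 gwu gwp gwq) => // e.
    + by move: up; rewrite /= !inE e eqxx !orbT.
    + by move: uq; rewrite /= !inE e eqxx !orbT.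
  move=> e; subst q1.
  apply: (IH q w p1 gwp) => //.
  + by move: up => /= /andP [_ ->].
  + by move: uq => /= /andP [_ ->].
Qed.

Lemma PL x y z : uniqnb x -> uniqnb y -> uniqnb z -> x != y -> x != z -> y != z ->
  connect g x y -> connect g x z -> False.
Proof.
move=> hx hy hz xy xz yz /connectP [p pp ly] /connectP [q pq lz].
move: ly; case: (shortenP pp) => p' pp' up' _ {pp} ly.
move: lz; case: (shortenP pq) => q' pq' uq' _ {pq} lz.
case: p' pp' up' ly => [|w pp0] /=; first by move=> _ _ exy; move: xy; rewrite exy eqxx.
case: q' pq' uq' lz => [|w' qq0] /=; first by move=> _ _ exz; move: xz; rewrite exz eqxx.
move=> /andP [gxw' pq] uq lz /andP [gxw pp] up ly.
case: (hx) => t [gxt ht].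
have e1 := ht w gxw; have e2 := ht w' gxw'; subst w w'.
have := walk gxt up uq pp pq; rewrite -ly -lz => /(_ hy hz) eyz.
by move: yz; rewrite eyz eqxx.
Qed.
End PL.

Lemma card_kernel (T U W : finType) (A : {set T}) (f : T -> U) (g : T -> W) :
  {in A &, forall x x', (f x == f x') = (g x == g x')} -> #|f @: A| = #|g @: A|.
Proof.
move=> H.
case: (pickP (mem A)) => [x0 x0A|A0]; last first.
  have -> : A = set0 by apply/setP => x; rewrite in_set0; have := A0 x.
  by rewrite !imset0 !cards0.
pose h (u : U) : W := if [pick x in A | f x == u] is Some x then g x else g x0.
have hf : {in A, forall x, h (f x) = g x}.
  move=> x xA; rewrite /h; case: pickP => [x' /andP [x'A /eqP e]|/(_ x)].
    by apply/eqP; rewrite -(H _ _ x'A xA) e.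
  by rewrite xA eqxx.
have -> : g @: A = h @: (f @: A).
  rewrite -imset_comp; apply: eq_in_imset => x xA /=; by rewrite hf.
rewrite [RHS]card_in_imset //.
move=> u u' /imsetP [x xA ->] /imsetP [x' x'A ->].
rewrite !hf // => e; apply/eqP; rewrite H //; by rewrite e.
Qed.

Lemma connect_hom (T U : finType) (g : rel T) (g' : rel U) (f : T -> U) :
  (forall a c, g a c -> connect g' (f a) (f c)) ->
  forall a c, connect g a c -> connect g' (f a) (f c).
Proof.
move=> H a c /connectP [p pp ->]; elim: p a pp => [|b p IH] a /=; first by move=> _; exact: connect0.
by move=> /andP [gab pb]; apply: connect_trans (H _ _ gab) (IH _ pb).
Qed.

Section NcompMove.
Variable (V : finType).
Implicit Types (R : {set {set V}}).
Definition comp R x := [set t | connect (esub_adj R) x t].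

Lemma ncompE R : ncomp R = #|[set comp R x | x in esub_verts R]|.
Proof. by []. Qed.

Lemma esub_sym R : symmetric (esub_adj R).
Proof. by move=> x y; rewrite /esub_adj setUC. Qed.

Lemma comp_eq R x x' : (comp R x == comp R x') = connect (esub_adj R) x x'.
Proof.
have cs := sym_connect_sym (esub_sym R).
apply/eqP/idP => [e|h].
  have : x' \in comp R x' by rewrite inE connect0.
  by rewrite -e inE.
apply/setP => t; rewrite !inE; apply/idP/idP => h2.
  by apply: connect_trans h2; rewrite cs.
exact: connect_trans h h2.
Qed.

Lemma in_set2' (x a b : V) : x \in [set a; b] -> (x == a) || (x == b).
Proof. by rewrite !inE. Qed.

Lemma ncomp_move R (y v q : V) :
  y != v -> q != v -> q != y ->
  [set y; v] \in R ->
  (forall e, e \in R -> y \in e -> e = [set y; v]) ->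
  (forall e, e \in R -> v \in e -> e = [set y; v]) ->
  q \in esub_verts R ->
  ncomp ([set y; q] |: (R :\ [set y; v])) < ncomp R.
Proof.
move=> yv qv qy nR Ry Rv qA.
set o := [set y; q]; set n := [set y; v].
set R' := o |: (R :\ n).
pose rho x := if x == y then q else x.
pose rho' x := if x == v then y else x.
have yo : y \in o by rewrite !inE eqxx.
have qo : q \in o by rewrite !inE eqxx orbT.
have yn : y \in n by rewrite !inE eqxx.
have vn : v \in n by rewrite !inE eqxx orbT.
have adjR' : forall a c, esub_adj R' a c = ([set a; c] == o) || ([set a; c] != n) && ([set a; c] \in R).
  by move=> a c; rewrite /esub_adj /R' in_setU1 in_setD1.
have ac_in : forall a c : V, a \in [set a; c] /\ c \in [set a; c].
  by move=> a c; rewrite !inE !eqxx orbT.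
have hom1 : forall a c, esub_adj R' a c -> connect (esub_adj R) (rho a) (rho c).
  move=> a c; rewrite adjR' => /orP [/eqP e|/andP [ne eR]].
    have [ha hc] := ac_in a c; rewrite e in ha hc.
    have rq : forall z, z \in o -> rho z = q.
      by move=> z /in_set2' /orP [] /eqP ->; rewrite /rho ?eqxx // (negbTE qy).
    by rewrite (rq _ ha) (rq _ hc) connect0.
  have [ha hc] := ac_in a c.
  have ay : a != y by apply: contraNneq ne => ey; rewrite (Ry _ eR) // -ey.
  have cy : c != y by apply: contraNneq ne => ey; rewrite (Ry _ eR) // -ey.
  by rewrite /rho (negbTE ay) (negbTE cy); apply: connect1.
have hom2 : forall a c, esub_adj R a c -> connect (esub_adj R') (rho' a) (rho' c).
  move=> a c eR; have [ha hc] := ac_in a c.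
  have {}eR : [set a; c] \in R := eR.
  case: (eqVneq [set a; c] n) => [e|ne].
    rewrite e in ha hc.
    have rq : forall z, z \in n -> rho' z = y.
      by move=> z /in_set2' /orP [] /eqP ->; rewrite /rho' ?eqxx // (negbTE yv).
    by rewrite (rq _ ha) (rq _ hc) connect0.
  have av : a != v by apply: contraNneq ne => ev; rewrite (Rv _ eR) // -ev.
  have cv : c != v by apply: contraNneq ne => ev; rewrite (Rv _ eR) // -ev.
  rewrite /rho' (negbTE av) (negbTE cv); apply: connect1.
  by rewrite adjR' ne eR orbT.
have vA' : v \notin esub_verts R'.
  apply/negP => /bigcupP [e eR' ve].
  move: eR'; rewrite /R' in_setU1 in_setD1 => /orP [/eqP eo|/andP [ne eR]].
    by move: ve; rewrite eo => /in_set2' /orP [] /eqP e0; [rewrite e0 eqxx in yv | rewrite e0 eqxx in qv].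
  by move: ne; rewrite (Rv _ eR ve) eqxx.
have back : forall x, x \in esub_verts R' -> connect (esub_adj R') x (rho' (rho x)).
  move=> x xA; rewrite /rho; case: (eqVneq x y) => [->|xy].
    rewrite /rho' (negbTE qv); apply: connect1; by rewrite adjR' eqxx.
  have xv : x != v by apply: contraNneq vA' => <-.
  by rewrite /rho' (negbTE xv) connect0.
have cs' := sym_connect_sym (esub_sym R').
pose f x := comp R (rho x).
have ker : {in esub_verts R' &, forall x x', (comp R' x == comp R' x') = (f x == f x')}.
  move=> x x' xA x'A; rewrite /f !comp_eq; apply/idP/idP => h.
    exact: (@connect_hom _ _ _ _ rho hom1 _ _ h).
  have h2 := @connect_hom _ _ _ _ rho' hom2 _ _ h.
  apply: connect_trans (back _ xA) _; apply: connect_trans h2 _.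
  by rewrite cs'; apply: back.
set S := [set comp R x | x in esub_verts R].
have yA : y \in esub_verts R by apply/bigcupP; exists n.
have sub : f @: esub_verts R' \subset S :\ comp R y.
  apply/subsetP => _ /imsetP [x xA ->]; rewrite in_setD1; apply/andP; split.
    rewrite /f comp_eq.
    have cl : closed (esub_adj R) n.
      move=> a c h; apply/idP/idP => hm.
        have := ac_in a c => -[ha hc].
        have : [set a; c] = n by case/in_set2'/orP: hm => /eqP e; [apply: Ry | apply: Rv] => //; rewrite -e.
        by move=> e; rewrite -e.
      have := ac_in a c => -[ha hc].
      have : [set a; c] = n by case/in_set2'/orP: hm => /eqP e; [apply: Ry | apply: Rv] => //; rewrite -e.
      by move=> e; rewrite -e.
    apply/negP => /(closed_connect cl); rewrite yn => hrx.
    move: hrx.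
    move/in_set2'/orP; rewrite /rho; case: (eqVneq x y) => [_|xy] [] /eqP e.
    - by rewrite e eqxx in qy.
    - by rewrite e eqxx in qv.
    - by rewrite e eqxx in xy.
    - by move: vA'; rewrite -e xA.
  apply/imsetP; exists (rho x) => //.
  rewrite /rho; case: (eqVneq x y) => // xy.
  move: xA => /bigcupP [e]; rewrite /R' in_setU1 in_setD1 => /orP [/eqP ->|/andP [_ eR]] xe.
    by case/in_set2'/orP: xe => /eqP e0; [rewrite e0 eqxx in xy|rewrite e0].
  by apply/bigcupP; exists e.
rewrite !ncompE -/S.
rewrite (card_kernel ker).
have h1 := subset_leq_card sub.
have cyS : comp R y \in S by apply/imsetP; exists y.
have h2 := cardsD1 (comp R y) S; rewrite cyS in h2.
by rewrite h2 add1n ltnS.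
Qed.
End NcompMove.

Lemma ndisj (T : finType) (A B : {set T}) : ~~ [disjoint A & B] -> exists2 z, z \in A & z \in B.
Proof.
move=> h; case: (pickP [pred z | (z \in A) && (z \in B)]) => [z /andP [? ?]|H].
  by exists z.
by move: h; rewrite (_ : [disjoint A & B]) //; apply/disjP => z zA zB; have := H z; rewrite /= zA zB.
Qed.

Section Graph.
Variables (V : finType) (adj : rel V).
Hypotheses (adj_sym : symmetric adj) (adj_irr : irreflexive adj).
Hypotheses (maxdeg : forall x, deg adj x <= 3) (mindeg : forall x, 2 <= deg adj x).

Local Notation E := (edges adj).

Lemma adj_neq x y : adj x y -> x != y.
Proof. by apply: contraTneq => ->; rewrite adj_irr. Qed.

Lemma edgeP e : reflect (exists x y, adj x y /\ e = [set x; y]) (e \in E).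
Proof.
rewrite inE; apply: (iffP existsP) => [[x /existsP [y /andP [H /eqP ->]]]|[x [y [H ->]]]].
  by exists x, y.
by exists x; apply/existsP; exists y; rewrite H eqxx.
Qed.

Lemma set2C (x y : V) : [set x; y] = [set y; x].
Proof. by rewrite setUC. Qed.

Lemma edge2 e x y : e \in E -> x \in e -> y \in e -> x != y -> e = [set x; y].
Proof.
move=> /edgeP [a [b [Hab ->]]]; rewrite !inE => /orP [] /eqP -> /orP [] /eqP -> //;
  rewrite ?eqxx // => _; exact: set2C.
Qed.

Lemma edge_other e x : e \in E -> x \in e -> exists y, adj x y /\ e = [set x; y].
Proof.
move=> /edgeP [a [b [Hab ->]]]; rewrite !inE => /orP [] /eqP ->.
  by exists b.
by exists a; rewrite adj_sym set2C.
Qed.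

Lemma set2_inj (x a b : V) : [set x; a] = [set x; b] -> x != a -> a = b.
Proof.
move=> H xa; have : a \in [set x; b] by rewrite -H !inE eqxx orbT.
rewrite !inE eq_sym (negbTE xa) /= => /eqP; done.
Qed.

Lemma set2_inj' (x a b : V) : [set x; a] = [set x; b] -> adj x a -> a = b.
Proof. by move=> H /adj_neq; apply: set2_inj. Qed.

Lemma edge_set2 x y : adj x y -> [set x; y] \in E.
Proof. by move=> H; apply/edgeP; exists x, y. Qed.

Lemma set2_edge x y : [set x; y] \in E -> adj x y.
Proof.
move=> He; have [z [hz Heq]] := edge_other He (setU11 x [set y]).
case: (eqVneq x y) => [exy|nxy]; last by rewrite (set2_inj Heq nxy).
have : z \in [set x; y] by rewrite Heq !inE eqxx orbT.
rewrite -exy !inE orbb => /eqP ezx; by move: hz; rewrite ezx adj_irr.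
Qed.

Lemma deg_ge3 x a b c : adj x a -> adj x b -> adj x c ->
  a != b -> a != c -> b != c -> 3 <= deg adj x.
Proof.
move=> ha hb hc ab ac bc; rewrite /deg.
have sub : [set a; b; c] \subset [set y | adj x y].
  by apply/subsetP => y; rewrite !inE => /orP [/orP [] | ] /eqP ->.
apply: leq_trans (subset_leq_card sub).
have -> : [set a; b; c] = c |: [set a; b] by rewrite setUC.
by rewrite cardsU1 cards2 ab !inE negb_or eq_sym ac eq_sym bc.
Qed.

Lemma deg_ge4 x a b c d : adj x a -> adj x b -> adj x c -> adj x d ->
  a != b -> a != c -> a != d -> b != c -> b != d -> c != d -> 4 <= deg adj x.
Proof.
move=> ha hb hc hd ab ac ad bc bd cd; rewrite /deg.
have sub : [set a; b; c; d] \subset [set y | adj x y].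
  by apply/subsetP => y; rewrite !inE => /orP [/orP [/orP [] | ] | ] /eqP ->.
apply: leq_trans (subset_leq_card sub).
have -> : [set a; b; c; d] = d |: (c |: [set a; b]) by rewrite setUC (setUC _ [set c]).
rewrite cardsU1 cardsU1 cards2 !inE !negb_or.
rewrite ?(eq_sym d) ?(eq_sym c) ?(negbTE ab) ?(negbTE ad) ?(negbTE bd) ?(negbTE cd) ?(negbTE ac) ?(negbTE bc) /=; by rewrite eq_sym cd.
Qed.

Lemma deg_2or3 x : (deg adj x = 2) \/ (deg adj x = 3).
Proof. have := maxdeg x; have := mindeg x; lia. Qed.

Lemma deg2_nb x a b c : deg adj x = 2 -> adj x a -> adj x b -> adj x c ->
  [\/ a = b, a = c | b = c].
Proof.
move=> d2 ha hb hc.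
case: (eqVneq a b) => [->|ab]; first by constructor 1.
case: (eqVneq a c) => [->|ac]; first by constructor 2.
case: (eqVneq b c) => [->|bc]; first by constructor 3.
by have := deg_ge3 ha hb hc ab ac bc; rewrite d2.
Qed.

Lemma deg3_third x a b : deg adj x = 3 -> adj x a -> adj x b -> a != b ->
  exists c, [/\ adj x c, c != a & c != b].
Proof.
move=> d3 ha hb ab.
case: (pickP [pred c | adj x c && (c != a) && (c != b)]) => [c /andP [/andP [hc ca] cb]|H].
  by exists c.
suff : deg adj x <= 2 by rewrite d3.
rewrite /deg.
have sub : [set y | adj x y] \subset [set a; b].
  apply/subsetP => y; rewrite !inE => hy; have := H y; rewrite /= hy /=.
  by move/negbT; rewrite !negb_and !negbK.
have := subset_leq_card sub; rewrite cards2; case: (a != b) => /=; lia.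
Qed.


Hypothesis no33 : forall x y, adj x y -> ~~ ((deg adj x == 3) && (deg adj y == 3)).
Variables M1 M2 : {set {set V}}.
Hypotheses (hM1 : matching adj M1) (hM2 : matching adj M2) (hdisj : [disjoint M1 & M2]).
Hypothesis hmax : forall N1 N2 : {set {set V}}, matching adj N1 -> matching adj N2 ->
            [disjoint N1 & N2] -> #|N1 :|: N2| <= #|M1 :|: M2|.
Hypothesis hmin : forall N1 N2 : {set {set V}}, matching adj N1 -> matching adj N2 ->
            [disjoint N1 & N2] -> #|N1 :|: N2| = #|M1 :|: M2| ->
            ncomp (edges adj :\: (M1 :|: M2)) <= ncomp (edges adj :\: (N1 :|: N2)).

Definition C := M1 :|: M2.
Definition cadj : rel V := fun a c => [set a; c] \in C.
Definition one1 := uniqnb cadj.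

Definition cfg (N : bool -> {set {set V}}) :=
  [/\ matching adj (N true), matching adj (N false), [disjoint N true & N false] &
      #|N true :|: N false| = #|C|].
Definition base N := cfg N /\ N true :|: N false = C.
Definition has (N : bool -> {set {set V}}) b x := [exists e in N b, x \in e].
Definition Mc (b : bool) := if b then M1 else M2.
Implicit Types N : bool -> {set {set V}}.

Lemma deg33 x y : adj x y -> deg adj x = 3 -> deg adj y = 2.
Proof.
move=> hxy dx; have := no33 hxy; rewrite dx eqxx /=.
by case: (deg_2or3 y) => ->.
Qed.

Lemma match_uniq P e f x : matching adj P -> e \in P -> f \in P -> x \in e -> x \in f -> e = f.
Proof.
case=> _ H eP fP xe xf; apply/eqP/negPn/negP => /(H e f eP fP) /disjP /(_ x xe xf) [].
Qed.

Lemma match_set2 P x a b : matching adj P -> [set x; a] \in P -> [set x; b] \in P -> a = b.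
Proof.
move=> mP ha hb.
have := match_uniq mP ha hb (setU11 x _) (setU11 x _) => e.
apply: set2_inj e _; case: mP => /subsetP sub _.
exact: adj_neq (set2_edge (sub _ ha)).
Qed.

Lemma cfg_match N b : cfg N -> matching adj (N b).
Proof. by case: b => -[]. Qed.

Lemma cfg_disj N b e : cfg N -> e \in N b -> e \in N (~~ b) -> False.
Proof.
case=> _ _ /disjP H _; case: b => /= h1 h2; [exact: H h1 h2| exact: H h2 h1].
Qed.

Lemma cfgE N b e : cfg N -> e \in N b -> e \in E.
Proof. move=> /(cfg_match b) [/subsetP sub _]; exact: sub. Qed.

Lemma baseC N b e : base N -> e \in N b -> e \in C.
Proof. by case=> _ <-; case: b => h; rewrite inE h ?orbT. Qed.

Lemma CE e : e \in C -> e \in E.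
Proof.
rewrite /C => /setUP [] h; [case: hM1 => /subsetP sub _ | case: hM2 => /subsetP sub _]; exact: sub.
Qed.

Lemma cadj_adj x y : cadj x y -> adj x y.
Proof. by move/CE/set2_edge. Qed.

Lemma cadj_sym : symmetric cadj.
Proof. by move=> x y; rewrite /cadj set2C. Qed.

Lemma base_Mc : base Mc.
Proof. by split. Qed.

Lemma C_col N e : base N -> e \in C -> exists b, e \in N b.
Proof. by case=> _ <- /setUP [] h; [exists true| exists false]. Qed.

Lemma has_edge N b x : cfg N -> has N b x -> exists t, adj x t /\ [set x; t] \in N b.
Proof.
move=> hN /existsP [e /andP [eN xe]].
have [t [ht ee]] := edge_other (cfgE hN eN) xe.
by exists t; rewrite -ee.
Qed.

Lemma has_of N b x t : [set x; t] \in N b -> has N b x.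
Proof. by move=> h; apply/existsP; exists [set x; t]; rewrite h setU11. Qed.

Lemma union_b N b : N b :|: N (~~ b) = N true :|: N false.
Proof. by case: b => //=; rewrite setUC. Qed.

Lemma hmax_b P Q b : (if b then matching adj P else matching adj Q) ->
  (if b then matching adj Q else matching adj P) -> [disjoint P & Q] -> #|P :|: Q| <= #|C|.
Proof.
case: b => /= mP mQ d; first exact: hmax.
by rewrite setUC; apply: hmax => //; rewrite disjoint_sym.
Qed.

Lemma F0 N b e : cfg N -> e \in E -> e \notin N true :|: N false ->
  exists2 x, x \in e & has N b x.
Proof.
move=> hN eE enN.
case: (boolP [exists x in e, has N b x]) => [/exists_inP [x h1 h2]|/exists_inPn H]; first by exists x.
exfalso.
pose P := e |: N b.
have mP : matching adj P.
  have [/subsetP sub hm] := cfg_match b hN.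
  split; first by apply/subsetP => f; rewrite in_setU1 => /orP [/eqP ->|/sub].
  move=> f1 f2; rewrite !in_setU1 => /orP [/eqP ->|h1] /orP [/eqP ->|h2]; rewrite ?eqxx //.
  - move=> _; apply/disjP => x xe xf; have := H x xe; by rewrite /has => /exists_inPn /(_ f2 h2); rewrite xf.
  - move=> _; apply/disjP => x xf xe; have := H x xe; by rewrite /has => /exists_inPn /(_ f1 h1); rewrite xf.
  - exact: hm.
have dPQ : [disjoint P & N (~~ b)].
  apply/disjP => f; rewrite in_setU1 => /orP [/eqP ->|h1] h2.
    by move: enN; rewrite -(union_b N b) inE h2 orbT.
  exact: cfg_disj hN h1 h2.
have eqU : P :|: N (~~ b) = e |: (N true :|: N false) by rewrite /P -setUA union_b.
have Hm := fun c => cfg_match c hN.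
have key : #|P :|: N (~~ b)| <= #|C|.
  clearbody P; move: mP dPQ; case: b {H eqU} => mP dPQ.
    exact: hmax.
  by rewrite setUC; apply: hmax => //; rewrite disjoint_sym.
move: key; rewrite eqU cardsU1 (negbTE enN); case: hN => _ _ _ ->; by rewrite ltnn.
Qed.

Definition closedK (K : {set V}) :=
  forall e x y, e \in C -> x \in e -> y \in e -> x \in K -> y \in K.
Definition sw (K : {set V}) N (b : bool) : {set {set V}} :=
  [set e in N b | ~~ (e \subset K)] :|: [set e in N (~~ b) | e \subset K].

Lemma sw_mem K N b e : (e \in sw K N b) = (if e \subset K then e \in N (~~ b) else e \in N b).
Proof. by rewrite /sw in_setU !in_set; case: (e \subset K); rewrite ?andbT ?andbF ?orbF. Qed.

Lemma closed_sub K N b e x : base N -> closedK K -> e \in N b -> x \in e ->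
  (e \subset K) = (x \in K).
Proof.
move=> hN hK eN xe; have eC := baseC hN eN.
case xK: (x \in K).
  by apply/subsetP => y ye; apply: hK eC xe ye xK.
by apply/negbTE; apply/negP => /subsetP /(_ x xe); rewrite xK.
Qed.

Lemma sw_col K N b e x : base N -> closedK K -> e \in sw K N b -> x \in e ->
  e \in N (if x \in K then ~~ b else b).
Proof.
move=> hN hK; rewrite sw_mem => h xe.
case eK: (e \subset K); rewrite eK in h.
  by rewrite (subsetP eK x xe).
by rewrite -(closed_sub hN hK h xe) eK.
Qed.

Lemma sw_has K N b x : base N -> closedK K ->
  has (sw K N) b x = if x \in K then has N (~~ b) x else has N b x.
Proof.
move=> hN hK; apply/idP/idP.
  by case/exists_inP => e eS xe; have := sw_col hN hK eS xe; case: (x \in K) => h;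
     apply/exists_inP; exists e.
case xK: (x \in K) => /exists_inP [e eN xe]; apply/exists_inP; exists e => //;
  rewrite sw_mem.
- by rewrite (closed_sub hN hK eN xe) xK.
- by rewrite (closed_sub hN hK eN xe) xK.
Qed.

Lemma sw_base K N : base N -> closedK K -> base (sw K N).
Proof.
move=> hN hK.
have hU : sw K N true :|: sw K N false = N true :|: N false.
  apply/setP => e; rewrite in_setU !sw_mem /= in_setU; case: (e \subset K) => //; by rewrite orbC.
have hM : forall b, matching adj (sw K N b).
  move=> b; split.
    apply/subsetP => e; rewrite sw_mem; case: (e \subset K) => h.
      exact: cfgE (proj1 hN) h.
    exact: cfgE (proj1 hN) h.
  move=> e f eS fS ef; apply/disjP => x xe xf.
  have he := sw_col hN hK eS xe; have hf := sw_col hN hK fS xf.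
  have := match_uniq (cfg_match _ (proj1 hN)) he hf xe xf; by move/eqP: ef.
split; last by rewrite hU; case: hN.
split => //.
  apply/disjP => e; rewrite !sw_mem /=; case: (e \subset K) => h1 h2.
    exact: cfg_disj (proj1 hN) h2 h1.
  exact: cfg_disj (proj1 hN) h1 h2.
by rewrite hU; case: hN => -[].
Qed.

Definition compK v := [set t | connect cadj v t].

Lemma closed_compK v : closedK (compK v).
Proof.
move=> e x y eC xe ye; rewrite !inE => cx.
case: (eqVneq x y) => [<- //|xy].
have ee := edge2 (CE eC) xe ye xy.
apply: connect_trans cx (connect1 _); by rewrite /cadj -ee.
Qed.

Lemma cadj2 x a b c : cadj x a -> cadj x b -> cadj x c -> [\/ a = b, a = c | b = c].
Proof.
rewrite /cadj /C => /setUP [] ha /setUP [] hb /setUP [] hc.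
- by constructor 1; apply: match_set2 hM1 ha hb.
- by constructor 1; apply: match_set2 hM1 ha hb.
- by constructor 2; apply: match_set2 hM1 ha hc.
- by constructor 3; apply: match_set2 hM2 hb hc.
- by constructor 3; apply: match_set2 hM1 hb hc.
- by constructor 2; apply: match_set2 hM2 ha hc.
- by constructor 1; apply: match_set2 hM2 ha hb.
- by constructor 1; apply: match_set2 hM2 ha hb.
Qed.

Lemma PLc x y z : one1 x -> one1 y -> one1 z -> x != y -> x != z -> y != z ->
  connect cadj x y -> connect cadj x z -> False.
Proof. exact: (PL cadj_sym cadj2). Qed.

Lemma connect_symC x y : connect cadj x y = connect cadj y x.
Proof. exact: (sym_connect_sym cadj_sym). Qed.

Lemma in2 (x u v : V) : x \in [set u; v] -> x = u \/ x = v.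
Proof. by rewrite !inE => /orP [] /eqP ->; [left|right]. Qed.

Lemma KF N b u v : base N -> adj u v -> [set u; v] \notin C -> ~~ has N b u -> one1 v ->
  connect cadj u v.
Proof.
move=> hN huv nC nu [w [cw hw]].
apply/negPn/negP => nc.
pose K := compK v.
have uK : u \notin K by rewrite inE connect_symC.
have vK : v \in K by rewrite inE connect0.
have eE : [set u; v] \in E := edge_set2 huv.
have hvb : has N b v.
  have nU : [set u; v] \notin N true :|: N false by case: hN => _ ->.
  have [x /in2 [] -> hx] := F0 b (proj1 hN) eE nU => //.
  by move: nu; rewrite hx.
have [t [ht tN]] := has_edge (proj1 hN) hvb.
have tw : t = w := hw t (baseC hN tN).
subst t.
have hN' := sw_base hN (@closed_compK v).
have nU' : [set u; v] \notin sw K N true :|: sw K N false by case: hN' => _ ->.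
have hs := fun b x => @sw_has K N b x hN (@closed_compK v).
have [x /in2 [] -> hx] := F0 b (proj1 hN') eE nU'.
  by move: hx; rewrite hs (negbTE uK) (negbTE nu).
move: hx; rewrite hs vK.
move=> /(has_edge (proj1 hN)) [t [_ tN']].
have tw : t = w := hw t (baseC hN tN'); subst t.
exact: cfg_disj (proj1 hN) tN tN'.
Qed.

Lemma one1_of x a w : deg adj x = 2 -> adj x a -> [set x; a] \notin C -> cadj x w -> one1 x.
Proof.
move=> d2 ha na cw; exists w; split => // w' cw'.
case: (deg2_nb d2 ha (cadj_adj cw) (cadj_adj cw')) => e.
- by move: na cw; rewrite e /cadj => /negbTE ->.
- by move: na cw'; rewrite e /cadj => /negbTE ->.
- by [].
Qed.

Lemma one1_nb x w w' : one1 x -> cadj x w -> cadj x w' -> w = w'.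
Proof. by case=> t [_ ht] h1 h2; rewrite (ht _ h1) (ht _ h2). Qed.

Lemma F1 N b y v : base N -> deg adj y = 3 -> adj y v -> [set y; v] \notin C -> has N b y.
Proof.
move=> hN d3 hyv nC; case: (boolP (has N b y)) => // nyb; exfalso.
have d2v : deg adj v = 2 := deg33 hyv d3.
have eE := edge_set2 hyv.
have nU : [set y; v] \notin N true :|: N false by case: hN => _ ->.
have Hv : forall c d, [set c; d] \notin C -> adj c d -> deg adj d = 2 -> ~~ has N b c ->
   one1 d /\ has N b d.
  move=> c d ncv hcv dv nc.
  have nU' : [set c; d] \notin N true :|: N false by case: hN => _ ->.
  have [x /in2 [] -> hx] := F0 b (proj1 hN) (edge_set2 hcv) nU'.
  - by move: nc; rewrite hx.
  - have [t [ht tN]] := has_edge (proj1 hN) hx.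
    split => //; apply: (one1_of dv (a := c)); first by rewrite adj_sym.
      by rewrite set2C.
    exact: baseC hN tN.
have [o1v hvb] := Hv y v nC hyv d2v nyb.
have [t [ht tN]] := has_edge (proj1 hN) hvb.
have hyb' : has N (~~ b) y.
  have [x /in2 [] -> hx] := F0 (~~ b) (proj1 hN) eE nU => //.
  have [t' [ht' tN']] := has_edge (proj1 hN) hx.
  have := one1_nb o1v (baseC hN tN) (baseC hN tN'); move=> e; subst t'.
  by case: (cfg_disj (proj1 hN) tN tN').
have [q [hq qN]] := has_edge (proj1 hN) hyb'.
have qv : q != v by apply: contraTneq nC => e; rewrite -e negbK; exact: baseC hN qN.
have vq : v != q by rewrite eq_sym.
have [c [hc cv cq]] := deg3_third d3 hyv hq vq.
have ncC : [set y; c] \notin C.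
  apply/negP => /(C_col hN) [b' hb'].
  case: (boolP (b' == b)) => [/eqP eb|nb].
    by subst b'; move: nyb; rewrite (has_of hb').
  have eb : b' = ~~ b by move: nb; case: (b); case: (b').
  subst b'; have := match_set2 (cfg_match _ (proj1 hN)) hb' qN => e; subst c.
  by rewrite eqxx in cq.
have [o1c _] := Hv y c ncC hc (deg33 hc d3) nyb.
have o1c' : one1 c.
  exact: o1c.
have o1y : one1 y.
  exists q; split; first exact: baseC hN qN.
  move=> t' /(C_col hN) [b' hb'].
  case: (boolP (b' == b)) => [/eqP eb|nb].
    by subst b'; move: nyb; rewrite (has_of hb').
  have eb : b' = ~~ b by move: nb; case: (b); case: (b').
  subst b'; exact: match_set2 (cfg_match _ (proj1 hN)) hb' qN.
have k1 := KF hN hyv nC nyb o1v.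
have k2 := KF hN hc ncC nyb o1c.
apply: (PLc o1y o1v o1c _ _ _ k1 k2).
- exact: adj_neq hyv.
- exact: adj_neq hc.
- by rewrite eq_sym.
Qed.

Definition mv N b (o n : {set V}) (c : bool) : {set {set V}} :=
  if c == b then n |: (N b :\ o) else N c.

Lemma mv_b N b o n : mv N b o n b = n |: (N b :\ o).
Proof. by rewrite /mv eqxx. Qed.

Lemma mv_nb N b o n : mv N b o n (~~ b) = N (~~ b).
Proof. by rewrite /mv; case: b. Qed.

Lemma cfg_of N' b : matching adj (N' b) -> matching adj (N' (~~ b)) ->
  (forall e, e \in N' b -> e \in N' (~~ b) -> False) ->
  #|N' b :|: N' (~~ b)| = #|C| -> cfg N'.
Proof.
move=> m1 m2 d s; rewrite union_b in s.
case: b m1 m2 d => m1 m2 d; split => //; apply/disjP => e h1 h2.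
  exact: d h1 h2.
exact: d h2 h1.
Qed.

Lemma mv_cfg N b w u w' : base N -> [set w; u] \in N b -> adj w w' ->
  [set w; w'] \notin C -> ~~ has N b w' ->
  cfg (mv N b [set w; u] [set w; w']).
Proof.
move=> hN ho hn nC nh.
set o := [set w; u]; set n := [set w; w'].
have oC : o \in C := baseC hN ho.
have nN : forall c, n \notin N c by move=> c; apply/negP => /(baseC hN); rewrite (negbTE nC).
have hU : mv N b o n b :|: mv N b o n (~~ b) = n |: (C :\ o).
  rewrite mv_b mv_nb; case: hN => hc <-; rewrite -(union_b N b).
  apply/setP => e; rewrite !in_setU !in_set1 !in_setD1 !in_setU.
  case: (eqVneq e o) => [->|eo] /=; last by rewrite orbA.
  case: (boolP (o \in N (~~ b))) => [h|_]; [by case: (cfg_disj hc ho h) | by rewrite orbF].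
have [/subsetP sb mb] := cfg_match b (proj1 hN).
apply: (@cfg_of _ b).
- rewrite mv_b; split.
    apply/subsetP => e; rewrite in_setU1 in_setD1 => /orP [/eqP ->|/andP [_ /sb //]].
    exact: edge_set2.
  have key : forall f, f \in N b -> f != o -> [disjoint n & f].
    move=> f fN fo; apply/disjP => x /in_set2' /orP [] /eqP -> xf.
      by move: fo; rewrite (match_uniq (cfg_match b (proj1 hN)) fN ho xf) ?eqxx // !inE eqxx.
    by move: nh; rewrite /has; apply/negP/negPn/exists_inP; exists f.
  move=> e f; rewrite !in_setU1 !in_setD1 => /orP [/eqP ->|/andP [eo eN]] /orP [/eqP ->|/andP [fo fN]];
    rewrite ?eqxx // => ef.
  + exact: key.
  + by rewrite disjoint_sym; apply: key.
  + exact: mb.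
- by rewrite mv_nb; apply: cfg_match (proj1 hN).
- move=> e; rewrite mv_b mv_nb in_setU1 in_setD1 => /orP [/eqP ->|/andP [_ h1]] h2.
    by move: (nN (~~ b)); rewrite h2.
  exact: cfg_disj (proj1 hN) h1 h2.
- rewrite hU cardsU1 in_setD1 (negbTE nC) andbF /=.
  by rewrite [in RHS](cardsD1 o) oC.
Qed.

Lemma mv_union N b o n : base N -> o \in N b ->
  mv N b o n true :|: mv N b o n false = n |: (C :\ o).
Proof.
move=> hN ho; rewrite -(union_b (mv N b o n) b) mv_b mv_nb.
case: hN => hc <-; rewrite -(union_b N b).
apply/setP => e; rewrite !in_setU !in_set1 !in_setD1 !in_setU.
case: (eqVneq e o) => [->|eo] /=; last by rewrite orbA.
case: (boolP (o \in N (~~ b))) => [h|_]; [by case: (cfg_disj hc ho h) | by rewrite orbF].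
Qed.

Lemma mv_mem N b o n c e : e \in mv N b o n c =
  if c == b then (e == n) || (e != o) && (e \in N b) else e \in N c.
Proof. by rewrite /mv; case: (c == b); rewrite ?in_setU1 ?in_setD1. Qed.

Lemma Trans4 N a w u w' v : base N -> [set w; u] \in N a -> adj w w' ->
  [set w; w'] \notin C -> ~~ has N a w' -> (forall t, cadj u t -> t = w) ->
  adj u v -> [set u; v] \notin C -> (exists b, ~~ has N b v) ->
  v != w -> v != w' -> u != w' -> False.
Proof.
move=> hN ho hww nC nh hu huv nuv [b nb] vw vw' uw'.
set o := [set w; u]; set n := [set w; w'].
have hc := mv_cfg hN ho hww nC nh.
have uw : u != w by rewrite eq_sym; apply: adj_neq (set2_edge (cfgE (proj1 hN) ho)).
have un : u \notin n by rewrite !inE negb_or uw.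
have vn : v \notin n by rewrite !inE negb_or vw.
have nU : [set u; v] \notin mv N a o n true :|: mv N a o n false.
  rewrite (@mv_union N a o n hN ho) in_setU1 in_setD1 (negbTE nuv) andbF orbF.
  by apply/eqP => e; move: un; rewrite -e !inE eqxx.
have [x /in2 [] -> hx] := F0 b hc (edge_set2 huv) nU.
- have [t [ht tN]] := has_edge hc hx.
  move: tN; rewrite mv_mem; case: (eqVneq b a) => [eba|nba].
    subst b; case/orP => [/eqP e|/andP [no tN]].
      by move: un; rewrite /n -e !inE eqxx.
    have tC : cadj u t := baseC hN tN.
    by move: no; rewrite (hu _ tC) /o set2C eqxx.
  move=> tN; have tC : cadj u t := baseC hN tN.
  rewrite (hu _ tC) set2C in tN.
  have eb : b = ~~ a by move: nba; case: (a); case: (b).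
  by subst b; apply: cfg_disj (proj1 hN) ho tN.
- have [t [ht tN]] := has_edge hc hx.
  move: tN; rewrite mv_mem; case: (eqVneq b a) => [eba|nba].
    subst b; case/orP => [/eqP e|/andP [no tN]].
      by move: vn; rewrite /n -e !inE eqxx.
    by move: nb; rewrite (has_of tN).
  by move=> tN; move: nb; rewrite (has_of tN).
Qed.

Lemma Blemma N b y v q c : base N -> deg adj y = 3 -> adj y v -> [set y; v] \notin C ->
  one1 v -> ~~ has N b v -> [set y; q] \in N b -> adj q c -> [set q; c] \notin C -> False.
Proof.
move=> hN d3 hyv nC o1v nvb hq hqc nqc.
set o := [set y; q]; set n := [set y; v].
have hc := mv_cfg hN hq hyv nC nvb.
have hU := @mv_union N b o n hN hq.
have H0 := hmin (cfg_match true hc) (cfg_match false hc).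
case: hc => m1 m2 dj sz.
have := H0 dj sz; rewrite hU -/C.
set R := E :\: C.
have yq : y != q by apply: adj_neq (set2_edge (cfgE (proj1 hN) hq)).
have vq : v != q.
  by apply: contraNneq nC => e; rewrite /n e; apply: baseC hN hq.
have yv : y != v := adj_neq hyv.
have d2v : deg adj v = 2 := deg33 hyv d3.
have [d hd] := has_edge (proj1 hN) (F1 (~~ b) hN d3 hyv nC).
have qd : q != d.
  apply/eqP => e; subst d; exact: cfg_disj (proj1 hN) hq hd.2.
have vd : v != d.
  by apply: contraNneq nC => e; rewrite /n e; apply: baseC hN hd.2.
have Ry : forall e, e \in R -> y \in e -> e = n.
  move=> e; rewrite in_setD => /andP [eC eE] ye.
  have [t [ht et]] := edge_other eE ye.
  case: (eqVneq t v) => [etv|tv]; first by rewrite et etv.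
  case: (eqVneq t q) => [tq|tq].
    by move: eC; rewrite et tq (baseC hN hq).
  case: (eqVneq t d) => [td|td].
    by move: eC; rewrite et td (baseC hN hd.2).
  have vt : v != t by rewrite eq_sym.
  have qt : q != t by rewrite eq_sym.
  have dt : d != t by rewrite eq_sym.
  by have := deg_ge4 hyv (set2_edge (cfgE (proj1 hN) hq)) hd.1 ht vq vd vt qd qt dt; rewrite d3.
have Rv : forall e, e \in R -> v \in e -> e = n.
  move=> e; rewrite in_setD => /andP [eC eE] ve.
  have [t [ht et]] := edge_other eE ve.
  case: (o1v) => w [cw _].
  have hvy : adj v y by rewrite adj_sym.
  case: (deg2_nb d2v hvy ht (cadj_adj cw)) => ey.
  - by rewrite et -ey set2C.
  - by move: cw; rewrite /cadj -ey set2C (negbTE nC).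
  - by move: eC cw; rewrite et ey /cadj => /negbTE ->.
have R'E : E :\: (n |: (C :\ o)) = o |: (R :\ n).
  have oE : o \in E := cfgE (proj1 hN) hq.
  have on : o != n.
    apply/eqP => /set2_inj /(_ yq) e; by rewrite e eqxx in vq.
  apply/setP => e; rewrite in_setD in_setU1 in_setD1 in_setU1 in_setD1 /R in_setD.
  case: (eqVneq e o) => [->|eo] /=.
    by rewrite (negbTE on) oE.
  by rewrite negb_or andbA.
rewrite R'E => H.
have : ncomp (o |: (R :\ n)) < ncomp R.
  apply: ncomp_move => //.
  - by rewrite eq_sym.
  - by rewrite eq_sym.
  - by rewrite in_setD nC edge_set2.
  - apply/bigcupP; exists [set q; c]; last by rewrite !inE eqxx.
    by rewrite in_setD nqc edge_set2.
by rewrite ltnNge H.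
Qed.

Definition Rs := E :\: C.

Lemma inRs x y : ([set x; y] \in Rs) = adj x y && ([set x; y] \notin C).
Proof.
rewrite /Rs in_setD andbC; case: (boolP (adj x y)) => h /=.
  by rewrite edge_set2.
case: (boolP ([set x; y] \in E)) => hE //=; by move: h; rewrite (set2_edge hE).
Qed.

Lemma Rs_other e x : e \in Rs -> x \in e -> exists t, [/\ adj x t, [set x; t] \notin C & e = [set x; t]].
Proof.
rewrite /Rs in_setD => /andP [eC eE] xe.
have [t [ht et]] := edge_other eE xe.
by exists t; rewrite -et.
Qed.

Lemma one1_miss N x : base N -> one1 x -> exists b, ~~ has N b x.
Proof.
move=> hN [w [cw hw]].
have [b hb] := C_col hN cw.
exists (~~ b); apply/negP => /(has_edge (proj1 hN)) [t [_ ht]].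
have := hw t (baseC hN ht) => e; subst t.
by apply: cfg_disj (proj1 hN) hb ht.
Qed.

Lemma two_R_noC x a b : adj x a -> adj x b -> a != b -> [set x; a] \notin C ->
  [set x; b] \notin C -> deg adj x = 2 /\ (forall t, ~~ cadj x t).
Proof.
move=> ha hb ab na nb.
have hM := base_Mc.
case: (deg_2or3 x) => dx.
  split => // t; apply/negP => ct.
  case: (deg2_nb dx ha hb (cadj_adj ct)) => e.
  - by rewrite e eqxx in ab.
  - by move: na ct; rewrite e /cadj => /negbTE ->.
  - by move: nb ct; rewrite e /cadj => /negbTE ->.
exfalso.
have [t1 [h1 t1N]] := has_edge (proj1 hM) (F1 true hM dx ha na).
have [t2 [h2 t2N]] := has_edge (proj1 hM) (F1 false hM dx ha na).
have c1 := baseC hM t1N; have c2 := baseC hM t2N.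
have t12 : t1 != t2.
  by apply/eqP => e; subst t2; apply: cfg_disj (proj1 hM) t1N t2N.
have at1 : a != t1 by apply: contraNneq na => ->.
have at2 : a != t2 by apply: contraNneq na => ->.
have bt1 : b != t1 by apply: contraNneq nb => ->.
have bt2 : b != t2 by apply: contraNneq nb => ->.
by have := deg_ge4 ha hb h1 h2 ab at1 at2 bt1 bt2 t12; rewrite dx.
Qed.

Lemma center_nb x a : (forall t, ~~ cadj x t) -> adj x a -> [set x; a] \notin C ->
  deg adj a = 3.
Proof.
move=> nc ha na.
have hM := base_Mc.
have nU : [set x; a] \notin Mc true :|: Mc false by [].
have get : forall b, exists t, adj a t /\ [set a; t] \in Mc b.
  move=> b; have [z /in2 [] -> hz] := F0 b (proj1 hM) (edge_set2 ha) nU.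
    have [t [ht tN]] := has_edge (proj1 hM) hz.
    by move: (nc t); rewrite /cadj (baseC hM tN).
  exact: has_edge (proj1 hM) hz.
have [t1 [h1 t1N]] := get true; have [t2 [h2 t2N]] := get false.
have t12 : t1 != t2.
  by apply/eqP => e; subst t2; apply: cfg_disj (proj1 hM) t1N t2N.
have hax : adj a x by rewrite adj_sym.
have xt1 : x != t1.
  apply/eqP => e; subst t1; move: (nc a); rewrite /cadj set2C (baseC hM t1N) //.
have xt2 : x != t2.
  apply/eqP => e; subst t2; move: (nc a); rewrite /cadj set2C (baseC hM t2N) //.
have := deg_ge3 hax h1 h2 xt1 xt2 t12.
by case: (deg_2or3 a) => ->.
Qed.

Definition ent (e f : {set V}) : bool :=
  (e != f) && [exists z in f, (deg adj z == 2) && ((z \in e) || [exists w in e, [set w; z] \in C])].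

Lemma one1_entry g z w : g \in Rs -> z \in g -> deg adj z = 2 -> [set w; z] \in C -> one1 z.
Proof.
move=> gR zg dz wz.
have [t [ht nt _]] := Rs_other gR zg.
apply: (@one1_of z t w dz ht nt); by rewrite /cadj set2C.
Qed.

Lemma noent22 u v e : adj u v -> [set u; v] \notin C -> deg adj u = 2 -> deg adj v = 2 ->
  e \in Rs -> e != [set u; v] -> (u \in e) || [exists w in e, [set w; u] \in C] -> False.
Proof.
move=> huv nuv du dv eR ef hent.
have hM := base_Mc.
have hvu : adj v u by rewrite adj_sym.
have nvu : [set v; u] \notin C by rewrite set2C.
have hasC : forall x y, adj x y -> [set x; y] \notin C -> deg adj y = 2 -> exists w, cadj x w.
  move=> x y hxy nxy dy.
  case: (pickP (cadj x)) => [w hw|H]; first by exists w.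
  have := center_nb (fun t => negbT (H t)) hxy nxy; by rewrite dy.
have [w0 cw0] := hasC u v huv nuv dv.
have [w1 cw1] := hasC v u hvu nvu du.
have o1u : one1 u := one1_of du huv nuv cw0.
have o1v : one1 v := one1_of dv hvu nvu cw1.
case/orP: hent => [ue|/exists_inP [w we cwu]].
  have [t [ht nt et]] := Rs_other eR ue.
  have tv : v != t by apply: contraNneq ef => e0; rewrite et e0.
  have [_ H] := two_R_noC huv ht tv nuv nt.
  by move: (H w0); rewrite cw0.
have cuw : cadj u w by rewrite /cadj set2C.
have [b nbu] := one1_miss hM o1u.
have kuv := KF hM huv nuv nbu o1v.
have [w' [hww' nww' ee]] := Rs_other eR we.
have uw : u != w := adj_neq (cadj_adj cuw).
have vw : v != w.
  by apply: contraNneq nuv => ->; rewrite set2C.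
have w'u : w' != u.
  by apply: contraNneq nww' => ->.
case: (deg_2or3 w) => dw.
  have o1w : one1 w.
    exact: (@one1_of w w' u dw hww' nww' cwu).
  apply: (PLc o1u o1v o1w (adj_neq huv) uw vw kuv (connect1 cuw)).
have w'v : w' != v.
  apply/eqP => e0; subst w'.
  case: (o1v) => t [ct _].
  have ut : u != t by apply: contraNneq nvu => ->; exact: ct.
  have wt : w != t.
    by apply: contraNneq nww' => ->; rewrite set2C; exact: ct.
  have hvw : adj v w by rewrite adj_sym.
  by have := deg_ge3 hvu hvw (cadj_adj ct) uw ut wt; rewrite dv.
have [a ha] := C_col hM cwu.
have hu : forall t, cadj u t -> t = w by move=> t ct; apply: one1_nb o1u ct cuw.
have [b' nbv] := one1_miss hM o1v.
case: (boolP (has Mc a w')) => hw'; last first.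
  apply: (Trans4 hM ha hww' nww' hw' hu huv nuv _ vw _ _); first by exists b'.
  - by rewrite eq_sym.
  - by rewrite eq_sym.
have dw' : deg adj w' = 2 := deg33 hww' dw.
have [t' [ht' t'N]] := has_edge (proj1 hM) hw'.
have hw'w : adj w' w by rewrite adj_sym.
have nw'w : [set w'; w] \notin C by rewrite set2C.
have o1w' : one1 w' := one1_of dw' hw'w nw'w (baseC hM t'N).
have nw'a : ~~ has Mc (~~ a) w'.
  apply/negP => /(has_edge (proj1 hM)) [t'' [_ t''N]].
  have := one1_nb o1w' (baseC hM t'N) (baseC hM t''N) => e0; subst t''.
  by apply: cfg_disj (proj1 hM) t'N t''N.
case: (boolP (u \in compK w')) => uK.
  have cw'u : connect cadj w' u by move: uK; rewrite inE.
  apply: (PLc o1w' o1u o1v _ _ (adj_neq huv) cw'u (connect_trans cw'u kuv)).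
    by rewrite w'u.
  by rewrite w'v.
pose N' := sw (compK w') Mc.
have hN' : base N' := sw_base hM (@closed_compK w').
have w'K : w' \in compK w' by rewrite inE connect0.
have ha' : [set w; u] \in N' a.
  rewrite /N' sw_mem; case: ifP => // /subsetP H.
  have : u \in compK w' by apply: H; rewrite !inE eqxx orbT.
  by rewrite (negbTE uK).
have hw'' : ~~ has N' a w'.
  by rewrite /N' sw_has ?w'K //; apply: closed_compK.
have [b'' nbv''] := one1_miss hN' o1v.
apply: (Trans4 hN' ha' hww' nww' hw'' hu huv nuv _ vw _ _); first by exists b''.
- by rewrite eq_sym.
- by rewrite eq_sym.
Qed.

Lemma twoR_at x e f : e \in Rs -> f \in Rs -> e != f -> x \in e -> x \in f ->
  deg adj x = 2 /\ (forall t, ~~ cadj x t).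
Proof.
move=> eR fR ef xe xf.
have [a [ha na ea]] := Rs_other eR xe.
have [b [hb nb fb]] := Rs_other fR xf.
have ab : a != b by apply: contraNneq ef => e0; rewrite ea fb e0.
exact: two_R_noC ha hb ab na nb.
Qed.

Lemma U1 e f : e \in Rs -> f \in Rs -> Hadj adj e f -> ent e f || ent f e.
Proof.
move=> eR fR /andP [ef hd].
have fe : f != e by rewrite eq_sym.
rewrite /ent ef fe /=.
case: (boolP [disjoint e & f]) => dj; last first.
  have [z ze zf] := ndisj dj.
  have [dz _] := twoR_at eR fR ef ze zf.
  apply/orP; left; apply/exists_inP; exists z => //.
  by rewrite dz eqxx ze.
move: hd; rewrite /edist_le2 dj /= => /exists_inP [g gE /andP [h1 h2]].
have [p pe pg] := ndisj h1.
have [q qg qf] := ndisj h2.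
have pq : p != q.
  by apply/eqP => e0; subst q; move: dj => /disjP /(_ p pe qf).
have ge := edge2 gE pg qg pq; subst g.
have hpq := set2_edge gE.
case: (boolP ([set p; q] \in C)) => gC.
  case: (deg_2or3 q) => dq.
    apply/orP; left; apply/exists_inP; exists q => //.
    rewrite dq eqxx /=; apply/orP; right; apply/exists_inP; by exists p.
  case: (deg_2or3 p) => dp.
    apply/orP; right; apply/exists_inP; exists p => //.
    rewrite dp eqxx /=; apply/orP; right; apply/exists_inP; exists q => //.
    by rewrite set2C.
  by move: (no33 hpq); rewrite dp dq eqxx.
exfalso.
have gR : [set p; q] \in Rs by rewrite inRs hpq gC.
have eg : e != [set p; q].
  by apply/eqP => e0; move: dj => /disjP /(_ q); rewrite e0 !inE eqxx orbT => /(_ isT qf).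
have gf : [set p; q] != f.
  by apply/eqP => e0; move: dj => /disjP /(_ p pe); rewrite -e0 !inE eqxx => /(_ isT).
have [_ Hp] := twoR_at eR gR eg pe (setU11 p _).
have qpq : q \in [set p; q] by rewrite !inE eqxx orbT.
have [_ Hq] := twoR_at gR fR gf qpq qf.
have hM := base_Mc.
have nU : [set p; q] \notin Mc true :|: Mc false by [].
have [x /in2 [] -> hx] := F0 true (proj1 hM) gE nU.
  have [t [_ tN]] := has_edge (proj1 hM) hx.
  by move: (Hp t); rewrite /cadj (baseC hM tN).
have [t [_ tN]] := has_edge (proj1 hM) hx.
by move: (Hq t); rewrite /cadj (baseC hM tN).
Qed.

Lemma edge_at_R e z : e \in Rs -> z \in e -> forall w, [set w; z] \in C -> forall t,
  e = [set z; t] -> w != t.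
Proof.
move=> eR ze w wz t et; apply/eqP => e0; subst w.
by move: eR; rewrite et inRs set2C wz andbF.
Qed.

Lemma U2 e e' f : e \in Rs -> e' \in Rs -> f \in Rs -> ent e f -> ent e' f -> e = e'.
Proof.
move=> eR e'R fR /andP [ef /exists_inP [z zf /andP [/eqP dz hz]]]
  /andP [e'f /exists_inP [z' z'f /andP [/eqP dz' hz']]].
have [a [ha na fa]] := Rs_other fR zf.
case: (eqVneq z z') => [ezz|zz]; last first.
  have fzz : f = [set z; z'].
    apply: edge2 => //; rewrite /Rs in_setD in fR; by case/andP: fR.
  have a_z' : a = z'.
    move: z'f; rewrite fa => /in2 [] e0; last by [].
    by rewrite e0 eqxx in zz.
  subst a.
  exfalso; apply: (noent22 ha na dz dz' eR _ hz).
  by rewrite -fa.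
subst z'.
have noC : forall h, h \in Rs -> h != f -> z \in h -> forall t, ~~ cadj z t.
  move=> h hR hf zh; exact: (twoR_at hR fR hf zh zf).2.
case/orP: hz => [ze|/exists_inP [w we cwz]]; case/orP: hz' => [ze'|/exists_inP [w' we' cw'z]].
- have [b [hb nb eb]] := Rs_other eR ze.
  have [b' [hb' nb' eb']] := Rs_other e'R ze'.
  have ab : a != b by apply: contraNneq ef => e0; rewrite eb fa e0.
  have ab' : a != b' by apply: contraNneq e'f => e0; rewrite eb' fa e0.
  case: (deg2_nb dz ha hb hb') => e0.
  - by rewrite e0 eqxx in ab.
  - by rewrite e0 eqxx in ab'.
  - by rewrite eb eb' e0.
- by move: (noC e eR ef ze w'); rewrite /cadj set2C cw'z.
- by move: (noC e' e'R e'f ze' w); rewrite /cadj set2C cwz.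
- have cw : cadj z w by rewrite /cadj set2C.
  have cw' : cadj z w' by rewrite /cadj set2C.
  have aw : a != w by apply: contraNneq na => ->.
  have aw' : a != w' by apply: contraNneq na => ->.
  have ww' : w = w'.
    case: (deg2_nb dz ha (cadj_adj cw) (cadj_adj cw')) => e0.
    - by rewrite e0 eqxx in aw.
    - by rewrite e0 eqxx in aw'.
    - by [].
  subst w'.
  case: (eqVneq e e') => // ne.
  by move: ((twoR_at eR e'R ne we we').2 z); rewrite /cadj cwz.
Qed.

Lemma shared e f h z : e \in Rs -> f \in Rs -> h \in Rs -> e != f -> z \in e -> z \in f ->
  ent h e -> h = f.
Proof.
move=> eR fR hR ef ze zf /andP [he /exists_inP [z' z'e /andP [/eqP dz' hz']]].
have [dz nc] := twoR_at eR fR ef ze zf.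
have [a [ha na ea]] := Rs_other eR ze.
have da := center_nb nc ha na.
have ez : z' = z.
  move: z'e; rewrite ea => /in2 [] // e0; by rewrite e0 da in dz'.
subst z'.
case/orP: hz' => [zh|/exists_inP [w wh cwz]]; last first.
  by move: (nc w); rewrite /cadj set2C cwz.
have [b [hb nb fb]] := Rs_other fR zf.
have [c [hc nc' hcb]] := Rs_other hR zh.
have ab : a != b by apply: contraNneq ef => e0; rewrite ea fb e0.
case: (deg2_nb dz ha hb hc) => e0.
- by rewrite e0 eqxx in ab.
- by move: he; rewrite hcb ea e0 eqxx.
- by rewrite hcb fb e0.
Qed.

Lemma centry e' e f : e' \in Rs -> e \in Rs -> f \in Rs -> ent e' e -> ent e f -> e' != f ->
  exists v w, [/\ v \in f, deg adj v = 2, w \in e & [set w; v] \in C].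
Proof.
move=> e'R eR fR h1 h2 ne.
have h2' := h2; move: h2' => /andP [ef /exists_inP [z zf /andP [/eqP dz hz]]].
case/orP: hz => [ze|/exists_inP [w we cwz]]; last by exists z, w.
by move: ne; rewrite (shared eR fR e'R ef ze zf h1) eqxx.
Qed.

Lemma step_b e f g v w z' w' : e \in Rs -> f \in Rs -> g \in Rs ->
  v \in f -> deg adj v = 2 -> w \in e -> [set w; v] \in C ->
  z' \in g -> deg adj z' = 2 -> w' \in f -> [set w'; z'] \in C ->
  connect cadj v z'.
Proof.
move=> eR fR gR vf dv we cwv z'g dz' w'f cw'z.
have hM := base_Mc.
have o1v : one1 v := one1_entry fR vf dv cwv.
have [y [hvy nvy fy]] := Rs_other fR vf.
move: w'f; rewrite fy => /in2 [] e0; subst w'.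
  by apply: connect1.
have hyv : adj y v by rewrite adj_sym.
have nyv : [set y; v] \notin C by rewrite set2C.
case: (deg_2or3 y) => dy.
  have o1y : one1 y := one1_of dy hyv nyv cw'z.
  have [b nb] := one1_miss hM o1v.
  have k := KF hM hvy nvy nb o1y.
  by apply: connect_trans k (connect1 cw'z).
apply/negPn/negP => nc.
have [c [hc nc' gc]] := Rs_other gR z'g.
have [a ha] := C_col hM cw'z.
case: (boolP (has Mc a v)) => hv; last first.
  exact: (Blemma hM dy hyv nyv o1v hv ha hc nc').
pose K := compK v.
have z'K : z' \notin K by rewrite inE.
have vK : v \in K by rewrite inE connect0.
pose N' := sw K Mc.
have hN' : base N' := sw_base hM (@closed_compK v).
have ha' : [set y; z'] \in N' a.
  rewrite /N' sw_mem; case: ifP => // /subsetP H.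
  have : z' \in K by apply: H; rewrite !inE eqxx orbT.
  by rewrite (negbTE z'K).
have hv' : ~~ has N' a v.
  rewrite /N' (@sw_has K Mc a v hM (@closed_compK v)) vK.
  apply/negP => /(has_edge (proj1 hM)) [t [_ tN]].
  have [t2 [_ t2N]] := has_edge (proj1 hM) hv.
  have := one1_nb o1v (baseC hM tN) (baseC hM t2N) => e1; subst t2.
  by apply: cfg_disj (proj1 hM) t2N tN.
exact: (Blemma hN' dy hyv nyv o1v hv' ha' hc nc').
Qed.

Lemma chain5 (a : nat -> {set V}) :
  (forall i, i < 5 -> a i \in Rs) ->
  (forall i, i < 4 -> Hadj adj (a i) (a i.+1)) ->
  (forall i, i < 3 -> a i != a i.+2) ->
  ent (a 0) (a 1) -> False.
Proof.
move=> Ra Ha Da e01.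
have step : forall i, i < 3 -> ent (a i) (a i.+1) -> ent (a i.+1) (a i.+2).
  move=> i hi h.
  have hi0 : i < 5 by lia.
  have hi1 : i.+1 < 5 by lia.
  have hi2 : i.+2 < 5 by lia.
  have hH : i.+1 < 4 by lia.
  case/orP: (U1 (Ra _ hi1) (Ra _ hi2) (Ha _ hH)) => // h'.
  have := U2 (Ra _ hi0) (Ra _ hi2) (Ra _ hi1) h h' => e0.
  by move: (Da i hi); rewrite e0 eqxx.
have e12 := step 0 isT e01.
have e23 := step 1 isT e12.
have e34 := step 2 isT e23.
have R := fun i (h : i < 5) => Ra i h.
have [v2 [w1 [v2f dv2 w1e c12]]] := centry (R 0 isT) (R 1 isT) (R 2 isT) e01 e12 (Da 0 isT).
have [v3 [w2 [v3f dv3 w2e c23]]] := centry (R 1 isT) (R 2 isT) (R 3 isT) e12 e23 (Da 1 isT).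
have [v4 [w3 [v4f dv4 w3e c34]]] := centry (R 2 isT) (R 3 isT) (R 4 isT) e23 e34 (Da 2 isT).
have k23 := step_b (R 1 isT) (R 2 isT) (R 3 isT) v2f dv2 w1e c12 v3f dv3 w2e c23.
have k34 := step_b (R 2 isT) (R 3 isT) (R 4 isT) v3f dv3 w2e c23 v4f dv4 w3e c34.
have o2 := one1_entry (R 2 isT) v2f dv2 c12.
have o3 := one1_entry (R 3 isT) v3f dv3 c23.
have o4 := one1_entry (R 4 isT) v4f dv4 c34.
have dist : forall i j vi vj wi, i < 5 -> j < 5 -> a i != a j -> vi \in a i -> vj \in a j ->
    [set wi; vi] \in C -> vi != vj.
  move=> i j vi vj wi hi hj nij vii vjj cw; apply/eqP => e0; subst vj.
  by move: ((twoR_at (R i hi) (R j hj) nij vii vjj).2 wi); rewrite /cadj set2C cw.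
have n23 : a 2 != a 3 by case/andP: e23.
have n34 : a 3 != a 4 by case/andP: e34.
have d32 : v3 != v2.
  by apply: (dist 3 2 v3 v2 w2) => //; rewrite eq_sym.
have d34 : v3 != v4 by apply: (dist 3 4 v3 v4 w2).
have d24 : v2 != v4 by apply: (dist 2 4 v2 v4 w1) => //; exact: (Da 2 isT).
apply: (PLc o3 o2 o4 d32 d34 d24 _ k34).
by rewrite connect_symC.
Qed.

Lemma Hadj_sym e f : Hadj adj e f = Hadj adj f e.
Proof.
rewrite /Hadj /edist_le2 eq_sym disjoint_sym; congr (_ && (_ || _)).
apply/exists_inP/exists_inP => -[g gE /andP [h1 h2]]; exists g => //;
  by rewrite disjoint_sym h2 disjoint_sym h1.
Qed.

Lemma main_sec (s : seq {set V}) :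
  all (fun e => e \in edges adj :\: (M1 :|: M2)) s ->
  uniq s -> cycle (Hadj adj) s -> ~~ odd (size s).
Proof.
move=> sall us cs; apply/negP => os.
have k3 : 3 <= size s.
  move: os cs; case: (s) => [|e [|e2 [|e3 s']]] //= _.
  by rewrite /Hadj eqxx.
set k := size s.
pose a i := nth set0 s (i %% k).
have kp : 0 < k by lia.
have Ra : forall i, a i \in Rs.
  move=> i; rewrite /a; apply: (allP sall); apply: mem_nth; by rewrite ltn_pmod.
have Ha : forall i, Hadj adj (a i) (a i.+1).
  move=> i; have := cycle_nth set0 cs (ltn_pmod i kp); rewrite -/k.
  have E1 : (i %% k).+1 %% k = i.+1 %% k by rewrite -addn1 -[i.+1]addn1 modnDml.
  by rewrite E1.
have Da : forall i, a i != a i.+2.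
  move=> i; rewrite /a nth_uniq ?ltn_pmod //.
  rewrite -[X in X %% k == _]addn0 -addn2 eqn_modDl mod0n modn_small //.
have Hsym := Hadj_sym.
case: (boolP (ent (a 0) (a 1))) => h.
  by apply: (chain5 (a := a)) h => i _; [apply: Ra | apply: Ha | apply: Da].
have h10 : ent (a 1) (a 0) by move: (U1 (Ra 0) (Ra 1) (Ha 0)); rewrite (negbTE h).
pose b i := a (k.+1 - i).
apply: (chain5 (a := b)).
- by move=> i _; apply: Ra.
- move=> i hi; rewrite /b.
  have -> : k.+1 - i = (k - i).+1 by lia.
  have -> : k.+1 - i.+1 = k - i by lia.
  by rewrite Hsym; apply: Ha.
- move=> i hi; rewrite /b.
  have -> : k.+1 - i = (k - i.+1).+2 by lia.
  have -> : k.+1 - i.+2 = k - i.+1 by lia.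
  by rewrite eq_sym; apply: Da.
- rewrite /b subn0 subn1 /=.
  have -> : a k.+1 = a 1 by rewrite /a -addn1 modnDl.
  have -> : a k = a 0 by rewrite /a modnn mod0n.
  exact: h10.
Qed.

End Graph.

Theorem lemma5 (V : finType) (adj : rel V)
  (adj_sym : symmetric adj) (adj_irr : irreflexive adj)
  (Gconn : connected_graph adj)
  (maxdeg : forall x, deg adj x <= 3)
  (mindeg : forall x, 2 <= deg adj x)
  (no33 : forall x y, adj x y -> ~~ ((deg adj x == 3) && (deg adj y == 3)))
  (M1 M2 : {set {set V}})
  (hM1 : matching adj M1) (hM2 : matching adj M2)
  (hdisj : [disjoint M1 & M2])
  (hmax : forall N1 N2 : {set {set V}}, matching adj N1 -> matching adj N2 ->
            [disjoint N1 & N2] -> #|N1 :|: N2| <= #|M1 :|: M2|)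
  (hmin : forall N1 N2 : {set {set V}}, matching adj N1 -> matching adj N2 ->
            [disjoint N1 & N2] -> #|N1 :|: N2| = #|M1 :|: M2| ->
            ncomp (edges adj :\: (M1 :|: M2)) <= ncomp (edges adj :\: (N1 :|: N2))) :
  forall s : seq {set V},
    all (fun e => e \in edges adj :\: (M1 :|: M2)) s ->
    uniq s -> cycle (Hadj adj) s -> ~~ odd (size s).
Proof.
move=> s; exact: (@main_sec V adj adj_sym adj_irr maxdeg mindeg no33 M1 M2 hM1 hM2 hdisj hmax hmin s).
Qed.
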